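(* Let $G$ be a network with three sources and three terminals containing no vertex of type $(3,3)$, $(2,3)$ or $(3,2)$, and let $\mathbb{F}$ be a finite field. For each color $c=(s_a,s_b,t_c,t_d)$ occurring among the $(2,2)$ vertices of $G$, let $f_c:\mathbb{F}^2\to\mathbb{F}$ be an arbitrary function. Then there exists a single network code on $G$ such that, for every such color $c$, every vertex of type $(2,2)$ and color $c$ can compute $f_c(X_a,X_b)$ from the symbols on its incoming edges.
   Context: A network is a finite directed acyclic graph $G=(V,E)$ (parallel edges allowed), every edge of unit capacity carrying one symbol of a finite field $\mathbb{F}$, with three sources $s_1,s_2,s_3$ (no incoming edges; $s_i$ holds $X_i\in\mathbb{F}$) and three terminals $t_1,t_2,t_3$ (no outgoing edges). A network code assigns to each edge leaving a source a function of its symbol, and to each edge leaving a non-source vertex $v$ a function of the symbols on edges entering $v$. For $v\in V$, $c_s(v)$ is the number of sources with a directed path to $v$ and $c_t(v)$ the number of terminals reachable from $v$ (a vertex reaches itself); $(c_s(v),c_t(v))$ is the type of $v$. For $v$ of type $(2,2)$, its color $\mathrm{col}(v)=(s_a,s_b,t_c,t_d)$ lists the two sources reaching $v$ and the two terminals reachable from $v$. *)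

(* Defs.v *)
From HB Require Import structures.
From mathcomp Require Import all_boot all_order all_algebra all_field.
Set Implicit Arguments. Unset Strict Implicit. Unset Printing Implicit Defensive.

(* A network: vertex type V, edge type E (parallel edges allowed since edges
   are a separate finite type), tail/head maps [src]/[tgt]. *)
Section Network.
Variables (V E : finType) (src tgt : E -> V).

Definition adj : rel V := fun u w => [exists e : E, (src e == u) && (tgt e == w)].

Definition reaches (u w : V) : bool := connect adj u w.

(* acyclicity: no edge closes a directed cycle (also forbids loops) *)
Definition acyclic : Prop := forall e : E, ~~ reaches (tgt e) (src e).

Variables (s t : 'I_3 -> V).

Definition srcs_of (v : V) : {set 'I_3} := [set i | reaches (s i) v].
Definition tgts_of (v : V) : {set 'I_3} := [set j | reaches v (t j)].

Definition c_s (v : V) : nat := #|srcs_of v|.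
Definition c_t (v : V) : nat := #|tgts_of v|.

Definition network3 : Prop :=
  [/\ acyclic, injective s, injective t,
      (forall (e : E) (i : 'I_3), tgt e != s i) &
      (forall (e : E) (j : 'I_3), src e != t j)].

Definition is_source (v : V) : bool := [exists i : 'I_3, v == s i].

Definition in_edges (v : V) := {e : E | tgt e == v}.

Variable F : finFieldType.

(* A network code, given by the global symbol g e X carried by each edge as a
   function of the source messages X; it is a network code iff every edge
   symbol is a local function: of X_i for edges leaving source s_i, and of
   the symbols on the incoming edges of the tail otherwise. *)
Definition network_code (g : E -> ('I_3 -> F) -> F) : Prop :=
  forall e : E,
    (forall i : 'I_3, src e = s i ->
       exists h : F -> F, forall X, g e X = h (X i)) /\
    (~~ is_source (src e) ->
       exists h : {ffun in_edges (src e) -> F} -> F,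
         forall X, g e X = h [ffun e' : in_edges (src e) => g (val e') X]).

Definition computes (g : E -> ('I_3 -> F) -> F) (v : V)
    (phi : ('I_3 -> F) -> F) : Prop :=
  exists h : {ffun in_edges v -> F} -> F,
    forall X, h [ffun e' : in_edges v => g (val e') X] = phi X.

End Network.

(* Main.v *)
Require Import Defs.
From HB Require Import structures.
From mathcomp Require Import all_boot all_order all_algebra all_field.
Set Implicit Arguments. Unset Strict Implicit. Unset Printing Implicit Defensive.

Definition lo (A : {set 'I_3}) : 'I_3 := if (ord0 : 'I_3) \in A then ord0 else inord 1.
Definition hi (A : {set 'I_3}) : 'I_3 := if (ord_max : 'I_3) \in A then ord_max else inord 1.
Definition pk (A : {set 'I_3}) : 'I_3 := odflt ord0 [pick i in A].

Lemma ord3_cases (x : 'I_3) : x = ord0 \/ x = inord 1 \/ x = ord_max.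
Proof.
case: x => [[|[|[|//]]] H]; [left|right;left|right;right]; apply: val_inj;
  by rewrite /= ?inordK.
Qed.

Lemma pk_set1 i : pk [set i] = i.
Proof.
rewrite /pk; case: pickP => [j|]; first by rewrite inE => /eqP ->.
by move=> /(_ i); rewrite inE eqxx.
Qed.

Lemma lo_in (A : {set 'I_3}) : #|A| = 2 -> lo A \in A.
Proof.
move=> HA; rewrite /lo; case: ifP => // H0; apply/negPn/negP => H1.
have Hsub : A \subset [set ord_max].
  apply/subsetP => x Hx; rewrite inE.
  case: (ord3_cases x) => [E|[E|E]]; subst x.
  - by rewrite H0 in Hx.
  - by rewrite Hx in H1.
  - by [].
by have := subset_leq_card Hsub; rewrite cards1 HA.
Qed.

Lemma hi_in (A : {set 'I_3}) : #|A| = 2 -> hi A \in A.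
Proof.
move=> HA; rewrite /hi; case: ifP => // H0; apply/negPn/negP => H1.
have Hsub : A \subset [set ord0].
  apply/subsetP => x Hx; rewrite inE.
  case: (ord3_cases x) => [E|[E|E]]; subst x.
  - by [].
  - by rewrite Hx in H1.
  - by rewrite H0 in Hx.
by have := subset_leq_card Hsub; rewrite cards1 HA.
Qed.

Lemma ne01 : ((ord0 : 'I_3) == inord 1) = false.
Proof. by apply/negbTE; apply/eqP => /(congr1 val); rewrite /= inordK. Qed.
Lemma ne21 : ((ord_max : 'I_3) == inord 1) = false.
Proof. by apply/negbTE; apply/eqP => /(congr1 val); rewrite /= inordK. Qed.
Lemma ne12 : ((inord 1 : 'I_3) == ord_max) = false.
Proof. by rewrite eq_sym ne21. Qed.
Lemma ne10 : ((inord 1 : 'I_3) == ord0) = false.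
Proof. by rewrite eq_sym ne01. Qed.

Lemma lohi_pair (a b : 'I_3) : (a < b)%N -> lo [set a; b] = a /\ hi [set a; b] = b.
Proof.
case: (ord3_cases a) => [E|[E|E]]; subst a;
case: (ord3_cases b) => [E|[E|E]]; subst b; rewrite /lo /hi !inE;
  try (move=> H; exfalso; move: H; rewrite /= ?inordK //; fail);
  move=> _; rewrite ?ne01 ?ne21 ?ne12 ?ne10 ?eqxx /= ?ne01 ?ne21 ?ne12 ?ne10 ?eqxx; split; apply: val_inj; rewrite /= ?inordK //.
Qed.

Lemma small_sub (A B : {set 'I_3}) x :
  A \subset B -> A != B -> #|B| = 2 -> x \in A -> A = [set x].
Proof.
move=> Hs Hne HB Hx.
have Hlt : (#|A| < #|B|)%N by apply: proper_card; rewrite properEneq Hne.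
rewrite HB in Hlt.
have H1 : #|A| == 1.
  by rewrite eqn_leq -ltnS Hlt /= card_gt0; apply/set0Pn; exists x.
have [y Hy] := cards1P H1.
by move: Hx; rewrite Hy inE => /eqP ->.
Qed.

Lemma sub_set1 (A : {set 'I_3}) i : A \subset [set i] -> i \in A -> A = [set i].
Proof. by move=> Hs Hi; apply/eqP; rewrite eqEsubset Hs sub1set Hi. Qed.

Lemma card3 (A : {set 'I_3}) : (#|A| <= 3)%N.
Proof. by have := max_card (mem A); rewrite card_ord. Qed.

Section Pf.
Variables (V E : finType) (src tgt : E -> V) (s t : 'I_3 -> V) (F : finFieldType).
Hypothesis Hnet : network3 src tgt s t.
Hypothesis Htypes : forall v : V,
     ~ (c_s src tgt s v = 3 /\ c_t src tgt t v = 3) /\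
     ~ (c_s src tgt s v = 2 /\ c_t src tgt t v = 3) /\
     ~ (c_s src tgt s v = 3 /\ c_t src tgt t v = 2).
Variable f : {set 'I_3} -> {set 'I_3} -> F -> F -> F.

Local Notation S := (srcs_of src tgt s).
Local Notation T := (tgts_of src tgt t).

Lemma reaches_last u w : reaches src tgt u w -> u != w ->
  exists e, tgt e = w /\ reaches src tgt u (src e).
Proof.
move=> /connectP [p Hp Hw] Huw; move: Hp Hw Huw.
elim/last_ind: p => [|p x _] /=.
  by move=> _ -> ; rewrite eqxx.
rewrite rcons_path last_rcons => /andP [Hp /existsP [e /andP [/eqP He1 /eqP He2]]] -> _.
exists e; split; first by [].
by rewrite He1; apply/connectP; exists p.
Qed.

Lemma S_mono e : S (src e) \subset S (tgt e).
Proof.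
apply/subsetP => i; rewrite !inE /reaches => H.
apply: connect_trans H _; apply: connect1; apply/existsP; exists e; by rewrite !eqxx.
Qed.

Lemma T_anti e : T (tgt e) \subset T (src e).
Proof.
apply/subsetP => i; rewrite !inE /reaches => H.
apply: connect_trans _ H; apply: connect1; apply/existsP; exists e; by rewrite !eqxx.
Qed.

Lemma S_source i : S (s i) = [set i].
Proof.
apply/setP => j; rewrite !inE.
apply/idP/eqP => [H|->]; last exact: connect0.
case: Hnet => _ Hs _ Htg _.
apply: Hs; apply/eqP; apply/negPn/negP => Hne.
have [e [He _]] := reaches_last H Hne.
by move: (Htg e i); rewrite He eqxx.
Qed.

Lemma in_edge_src v i : ~~ is_source s v -> i \in S v ->
  exists e, tgt e = v /\ i \in S (src e).
Proof.
move=> Hns; rewrite inE => H.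
have Hne : s i != v.
  apply: contraNneq Hns => <-; apply/existsP; exists i; by [].
have [e [He H2]] := reaches_last H Hne.
by exists e; rewrite inE.
Qed.

Definition phi (v : V) (X : 'I_3 -> F) : F :=
  if #|S v| == 1 then X (pk (S v))
  else if (#|S v| == 2) && (#|T v| == 2) then f (S v) (T v) (X (lo (S v))) (X (hi (S v)))
  else 0%R.

Lemma local v : ~~ is_source s v ->
  exists h : {ffun in_edges tgt v -> F} -> F,
    forall X, h [ffun e' : in_edges tgt v => phi (src (val e')) X] = phi v X.
Proof.
move=> Hns.
case H1 : (#|S v| == 1).
  have [i Hi] := cards1P H1.
  have Hiv : i \in S v by rewrite Hi set11.
  have [e [He Hie]] := in_edge_src Hns Hiv.
  have HSe : S (src e) = [set i].
    apply: sub_set1 Hie; rewrite -Hi -He; exact: S_mono.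
  pose e' : in_edges tgt v := exist _ e (introT eqP He).
  exists (fun y => y e') => X; rewrite ffunE /= /phi HSe H1 cards1 eqxx Hi.
  by [].
case H2 : ((#|S v| == 2) && (#|T v| == 2)); last first.
  by exists (fun _ => 0%R) => X; rewrite /phi H1 H2.
move: (H2) => /andP [/eqP HS2 /eqP HT2].
case: (boolP [exists e : in_edges tgt v, S (src (val e)) == S v]).
  move=> /existsP [[e He] /= /eqP HSe].
  have HTe : T (src e) = T v.
    have Hsub : T v \subset T (src e) by rewrite -(eqP He); exact: T_anti.
    have Hc : #|T (src e)| = 2.
      have := subset_leq_card Hsub; rewrite HT2 => Hge.
      have := card3 (T (src e)); rewrite leq_eqVlt ltnS => /orP [/eqP H3|H3].
        by exfalso; case: (Htypes (src e)) => _ [Hx _]; apply: Hx; rewrite /c_s /c_t HSe HS2 H3.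
      by apply/eqP; rewrite eqn_leq H3 Hge.
    apply/eqP; rewrite eq_sym eqEcard Hsub Hc HT2 leqnn //.
  exists (fun y => y (exist _ e He)) => X; rewrite ffunE /= /phi HSe HTe H1 H2.
  by [].
move=> /existsPn Hno.
have Hlo := lo_in HS2; have Hhi := hi_in HS2.
have [e1 [He1 Hi1]] := in_edge_src Hns Hlo.
have [e2 [He2 Hi2]] := in_edge_src Hns Hhi.
have HS1 : S (src e1) = [set lo (S v)].
  apply: (@small_sub _ (S v)) Hi1 => //; first by rewrite -He1; exact: S_mono.
  exact: (Hno (exist _ e1 (introT eqP He1))).
have HS2' : S (src e2) = [set hi (S v)].
  apply: (@small_sub _ (S v)) Hi2 => //; first by rewrite -He2; exact: S_mono.
  exact: (Hno (exist _ e2 (introT eqP He2))).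
exists (fun y => f (S v) (T v) (y (exist _ e1 (introT eqP He1))) (y (exist _ e2 (introT eqP He2)))) => X.
rewrite !ffunE /= /phi HS1 HS2' !cards1 eqxx H1 H2 !pk_set1.
by [].
Qed.

Lemma nonsrc_card v : #|S v| = 2 -> ~~ is_source s v.
Proof.
move=> H; apply/negP => /existsP [i /eqP Hv].
by move: H; rewrite Hv S_source cards1.
Qed.

End Pf.

Theorem mainTheorem11 (V E : finType) (src tgt : E -> V) (s t : 'I_3 -> V)
  (F : finFieldType)
  (Hnet : network3 src tgt s t)
  (Htypes : forall v : V,
     ~ (c_s src tgt s v = 3 /\ c_t src tgt t v = 3) /\
     ~ (c_s src tgt s v = 2 /\ c_t src tgt t v = 3) /\
     ~ (c_s src tgt s v = 3 /\ c_t src tgt t v = 2))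
  (f : {set 'I_3} -> {set 'I_3} -> F -> F -> F) :
  exists g : E -> ('I_3 -> F) -> F,
    network_code src tgt s g /\
    forall (v : V) (a b : 'I_3),
      c_s src tgt s v = 2 -> c_t src tgt t v = 2 ->
      (a < b)%N -> srcs_of src tgt s v = [set a; b] ->
      computes tgt g v
        (fun X => f (srcs_of src tgt s v) (tgts_of src tgt t v) (X a) (X b)).
Proof.
exists (fun e X => phi src tgt s t f (src e) X); split.
  move=> e; split.
    move=> i ->; exists id => X.
    by rewrite /phi (S_source Hnet) cards1 eqxx pk_set1.
  move=> Hns; have [h Hh] := local Htypes f Hns.
  exists h => X; exact: (esym (Hh X)).
move=> v a b Hcs Hct Hab HSv.
have [h Hh] := local Htypes f (nonsrc_card Hnet Hcs).
exists h => X; transitivity (phi src tgt s t f v X); first exact: Hh.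
rewrite /phi; rewrite /c_s in Hcs; rewrite /c_t in Hct.
rewrite Hcs Hct /= HSv.
by have [-> ->] := lohi_pair Hab.
Qed.
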